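(* Let $R$ be the subalgebra of $A^\pm_{p|q}$ generated by the elements $\partial_i x_i$, $i\in\{1,\dots,n\}$. Then $R$ is a maximal commutative subalgebra of $A^\pm_{p|q}$.
   Context: $\Bbbk$ is an algebraically closed field of characteristic $0$. Fix integers $p,q\ge 0$, put $n=p+q$, and fix a sign $\pm\in\{+,-\}$. Set $p(i)=0$ for $1\le i\le p$ and $p(i)=1$ for $p<i\le n$. The Clifford/Weyl superalgebra $A^\pm_{p|q}$ is the associative unital superalgebra over $\Bbbk$ generated by $x_i,\partial_i$ ($1\le i\le n$), where $x_i,\partial_i$ have parity $p(i)$, subject to the relations $[\partial_i,x_j]_\pm=\delta_{ij}$, $[x_i,x_j]_\pm=0$, $[\partial_i,\partial_j]_\pm=0$ for all $i,j$, where for homogeneous $a,b$ of parities $p(a),p(b)$ one sets $[a,b]_\pm=ab\pm(-1)^{p(a)p(b)}ba$. *)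

(* Defs.v *)
From HB Require Import structures.
From mathcomp Require Import all_boot all_order all_algebra.
Set Implicit Arguments. Unset Strict Implicit. Unset Printing Implicit Defensive.
Import GRing.Theory.
Local Open Scope ring_scope.

(* Parity of the index i : 'I_(p+q) (0-indexed): even for i < p, odd for i >= p. *)
Definition par (p q : nat) (i : 'I_(p + q)) : bool := (p <= i)%N.

(* Super (anti)commutator [a,b]_(+/-) = a b (+/-) (-1)^(pa pb) b a,
   sgn = true encodes "+", sgn = false encodes "-". *)
Definition supbr (K : fieldType) (A : algType K) (sgn : bool) (pa pb : bool)
  (a b : A) : A :=
  a * b + (((if sgn then 1 else -1) * (-1) ^+ (pa && pb)) : K) *: (b * a).

Definition clw_rel (K : fieldType) (A : algType K) (p q : nat) (sgn : bool)
  (x d : 'I_(p + q) -> A) : Prop :=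
  (forall i j, supbr sgn (par i) (par j) (d i) (x j) = (i == j)%:R) /\
  (forall i j, supbr sgn (par i) (par j) (x i) (x j) = 0) /\
  (forall i j, supbr sgn (par i) (par j) (d i) (d j) = 0).

Inductive gen_subalg (K : fieldType) (A : algType K) (S : A -> Prop) : A -> Prop :=
  | gen_base a : S a -> gen_subalg S a
  | gen_one : gen_subalg S 1
  | gen_scale c a : gen_subalg S a -> gen_subalg S (c *: a)
  | gen_add a b : gen_subalg S a -> gen_subalg S b -> gen_subalg S (a + b)
  | gen_mul a b : gen_subalg S a -> gen_subalg S b -> gen_subalg S (a * b).

Definition is_clifford_weyl (K : fieldType) (A : algType K) (p q : nat)
  (sgn : bool) (x d : 'I_(p + q) -> A) : Prop :=
  clw_rel sgn x d /\
  (forall a : A, gen_subalg (fun b => exists i, b = x i \/ b = d i) a) /\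
  (forall (B : algType K) (x' d' : 'I_(p + q) -> B), clw_rel sgn x' d' ->
     exists f : A -> B,
       [/\ forall a b, f (a + b) = f a + f b,
           forall a b, f (a * b) = f a * f b,
           f 1 = 1,
           forall (c : K) a, f (c *: a) = c *: f a &
           forall i, f (x i) = x' i /\ f (d i) = d' i]).

Definition is_subalg (K : fieldType) (A : algType K) (S : A -> Prop) : Prop :=
  [/\ S 1, forall a b, S a -> S b -> S (a + b),
      forall a b, S a -> S b -> S (a * b) &
      forall (c : K) a, S a -> S (c *: a)].

Definition is_commutative (K : fieldType) (A : algType K) (S : A -> Prop) : Prop :=
  forall a b, S a -> S b -> a * b = b * a.

Definition max_comm_subalg (K : fieldType) (A : algType K) (S : A -> Prop) : Prop :=
  [/\ is_subalg S, is_commutative S &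
      forall T : A -> Prop, is_subalg T -> is_commutative T ->
        (forall a, S a -> T a) -> forall a, T a -> S a].

(* Main.v *)
Require Import Defs.
From HB Require Import structures.
From mathcomp Require Import all_boot all_order all_algebra.
From mathcomp Require Import ring zify.
Import GRing.Theory.
Local Open Scope ring_scope.

Section CW.
Variable K : fieldType.
Hypothesis hK : [pchar K] =i pred0.
Variables (p q : nat) (sgn : bool) (A : algType K) (x d : 'I_(p+q) -> A).
Hypothesis hrel : clw_rel sgn x d.
Local Notation I := ('I_(p+q)).

Definition e (i j : I) : K := (if sgn then 1 else -1) * (-1) ^+ (par i && par j).
Lemma e2 i j : e i j * e i j = 1.
Proof. by rewrite /e; case: sgn; case: (par i && par j) => /=; rewrite ?expr0 ?expr1; ring. Qed.
Lemma e_sym i j : e i j = e j i.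
Proof. by rewrite /e andbC. Qed.

Lemma Rdx i j : d i * x j + e i j *: (x j * d i) = (i == j)%:R.
Proof. by case: hrel => H _; exact: H. Qed.
Lemma Rxx i j : x i * x j + e i j *: (x j * x i) = 0.
Proof. by case: hrel => _ [H _]; exact: H. Qed.
Lemma Rdd i j : d i * d j + e i j *: (d j * d i) = 0.
Proof. by case: hrel => _ [_ H]; exact: H. Qed.

Lemma eqZ (a b : A) (c : K) : a + c *: b = 0 -> a = - c *: b.
Proof. by move=> H; apply/eqP; rewrite scaleNr -addr_eq0 H. Qed.

Definition gen (b : bool) i := if b then x i else d i.

Lemma gen_comm b b' i j : i != j -> gen b i * gen b' j = - e i j *: (gen b' j * gen b i).
Proof.
move=> ij; case: b; case: b' => /=.
- exact/eqZ/Rxx.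
- have := Rdx j i; rewrite eq_sym (negbTE ij) => H.
  have H2 : e j i *: (x i * d j) = - (d j * x i) by apply/eqP; rewrite -addr_eq0 addrC H.
  have -> : x i * d j = e j i *: (e j i *: (x i * d j)) by rewrite scalerA e2 scale1r.
  by rewrite H2 scalerN -scaleNr e_sym.
- by apply/eqZ; rewrite Rdx (negbTE ij).
- exact/eqZ/Rdd.
Qed.

Definition h i := d i * x i.

Lemma gen_h b i j : i != j -> gen b i * h j = h j * gen b i.
Proof.
move=> ij; rewrite /h.
have E1 := gen_comm b false i j ij; have E2 := gen_comm b true i j ij; rewrite /= in E1 E2.
rewrite mulrA E1 -scalerAl -[d j * gen b i * x j]mulrA E2 -scalerAr scalerA mulrNN e2 scale1r mulrA //.
Qed.

Lemma h_comm i j : h i * h j = h j * h i.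
Proof.
case: (eqVneq i j) => [->//|ij].
have E1 := gen_h false i j ij; have E2 := gen_h true i j ij; rewrite /= in E1 E2.
by rewrite {1}/h -mulrA E2 mulrA E1 -mulrA.
Qed.

Definition e0 i := e i i.
Lemma xd i : x i * d i = e0 i *: (1 - h i).
Proof.
have := Rdx i i; rewrite eqxx mulr1n => H.
have -> : x i * d i = e0 i *: (e0 i *: (x i * d i)) by rewrite scalerA e2 scale1r.
by rewrite /h -H [d i * x i + _]addrC addrK.
Qed.


Definition Rs := gen_subalg (fun b => exists i, b = d i * x i).

Lemma R_h i : Rs (h i). Proof. by apply: gen_base; exists i. Qed.
Lemma R_sub a b : Rs a -> Rs b -> Rs (a - b).
Proof. by move=> Ha Hb; rewrite -scaleN1r; apply: gen_add => //; apply: gen_scale. Qed.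
Lemma R_1h c i : Rs (1 - c *: h i).
Proof. by apply: R_sub; [apply: gen_one | apply/gen_scale/R_h]. Qed.

Lemma R_hcomm a j : Rs a -> a * h j = h j * a.
Proof.
elim=> {a} [a [i ->]||||].
- exact: h_comm.
- by rewrite mul1r mulr1.
- by move=> c a _ IH; rewrite -scalerAl IH scalerAr.
- by move=> a b _ IHa _ IHb; rewrite mulrDl mulrDr IHa IHb.
- by move=> a b _ IHa _ IHb; rewrite -mulrA IHb mulrA IHa mulrA.
Qed.

Lemma R_comm a b : Rs a -> Rs b -> a * b = b * a.
Proof.
move=> Ha; elim=> {b} [b [j ->]||||].
- exact: R_hcomm.
- by rewrite mul1r mulr1.
- by move=> c b _ IH; rewrite -scalerAr IH scalerAl.
- by move=> b c _ IHb _ IHc; rewrite mulrDl mulrDr IHb IHc.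
- by move=> b c _ IHb _ IHc; rewrite mulrA IHb -mulrA IHc mulrA.
Qed.

Lemma hd i : h i * d i = e0 i *: (d i - d i * h i).
Proof. by rewrite /h -mulrA xd -scalerAr mulrBr mulr1. Qed.

Lemma dh i : d i * h i = (1 - e0 i *: h i) * d i.
Proof.
rewrite mulrBl mul1r -scalerAl hd scalerA e2 scale1r.
by rewrite opprB addrC subrK.
Qed.

Lemma xh i : x i * h i = (e0 i *: (1 - h i)) * x i.
Proof. by rewrite /h mulrA xd. Qed.

Lemma gen_R b i r : Rs r -> exists r', Rs r' /\ gen b i * r = r' * gen b i.
Proof.
elim=> {r} [a [j ->]||||].
- case: (eqVneq i j) => [<-|ij].
  + case: b => /=.
    * exists (e0 i *: (1 - h i)); split; last exact: xh.
      by apply/gen_scale; rewrite -[h i]scale1r; apply: R_1h.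
    * by exists (1 - e0 i *: h i); split; [apply: R_1h | apply: dh].
  + by exists (h j); split; [apply: R_h | apply: gen_h].
- by exists 1; split; [apply: gen_one | rewrite mul1r mulr1].
- move=> c a _ [r' [Hr' E]]; exists (c *: r'); split; first exact: gen_scale.
  by rewrite -scalerAr E scalerAl.
- move=> a a2 _ [r1 [H1 E1]] _ [r2 [H2 E2]]; exists (r1 + r2); split; first exact: gen_add.
  by rewrite mulrDr E1 E2 mulrDl.
- move=> a a2 _ [r1 [H1 E1]] _ [r2 [H2 E2]]; exists (r1 * r2); split; first exact: gen_mul.
  by rewrite mulrA E1 -mulrA E2 mulrA.
Qed.

Lemma genX_R b i m r : Rs r -> exists r', Rs r' /\ gen b i ^+ m * r = r' * gen b i ^+ m.
Proof.
elim: m r => [|m IH] r Hr; first by exists r; rewrite expr0 mul1r mulr1.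
have [r1 [H1 E1]] := gen_R b i r Hr.
have [r2 [H2 E2]] := IH _ H1.
by exists r2; split => //; rewrite exprSr -mulrA E1 mulrA E2 -mulrA -exprSr.
Qed.


Definition P i (k : int) : A := match k with Posz m => x i ^+ m | Negz m => d i ^+ m.+1 end.
Definition sg (b : bool) : int := if b then 1 else -1.
Definition upd (w : {ffun I -> int}) i b : {ffun I -> int} :=
  [ffun j => if j == i then w j + sg b else w j].
Definition Ns (s : seq I) (w : I -> int) := \prod_(j <- s) P j (w j).

Lemma gP b i k : exists r, Rs r /\ gen b i * P i k = r * P i (k + sg b).
Proof.
rewrite /sg; case: b; case: k => m.
- exists 1; split; first exact: gen_one.
  by rewrite mul1r (_ : Posz m + 1 = Posz m.+1) /= ?exprS //; lia.
- exists (e0 i *: (1 - h i)); split.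
    by apply/gen_scale; rewrite -[h i]scale1r; apply: R_1h.
  rewrite /= exprS mulrA xd; case: m => [|m].
    by rewrite (_ : Negz 0 + 1 = Posz 0) /= ?expr0 //; lia.
  by rewrite (_ : Negz m.+1 + 1 = Negz m) //; lia.
- case: m => [|m].
    exists 1; split; first exact: gen_one.
    by rewrite (_ : Posz 0 - 1 = Negz 0) /= ?expr1 ?expr0 ?mulr1 ?mul1r //; lia.
  exists (h i); split; first exact: R_h.
  by rewrite (_ : Posz m.+1 - 1 = Posz m) /= ?exprS ?mulrA //; lia.
- exists 1; split; first exact: gen_one.
  by rewrite (_ : Negz m - 1 = Negz m.+1) /= ?mul1r -?exprS //; lia.
Qed.

Lemma genX_other b b' i j m : i != j -> exists c : K,
  gen b i * gen b' j ^+ m = c *: (gen b' j ^+ m * gen b i).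
Proof.
move=> ij; elim: m => [|m [c IH]]; first by exists 1; rewrite expr0 mulr1 mul1r scale1r.
exists (c * - e i j).
by rewrite exprSr mulrA IH -scalerAl -(mulrA _ (gen b i)) (gen_comm b b' i j ij) -scalerAr scalerA mulrA.
Qed.

Lemma P_other b i j k : i != j -> exists c : K, gen b i * P j k = c *: (P j k * gen b i).
Proof. by move=> ij; case: k => m /=; [apply: (genX_other b true) | apply: (genX_other b false)]. Qed.

Lemma P_R j k r : Rs r -> exists r', Rs r' /\ P j k * r = r' * P j k.
Proof. by move=> Hr; case: k => m /=; [apply: (genX_R true) | apply: (genX_R false)]. Qed.

Lemma Ns_eq s (w w' : I -> int) : {in s, w =1 w'} -> Ns s w = Ns s w'.
Proof. by move=> H; apply: eq_big_seq => j /H ->. Qed.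

Lemma gNs b i (w : {ffun I -> int}) s : uniq s ->
  (i \in s -> exists r, Rs r /\ gen b i * Ns s w = r * Ns s (upd w i b)) /\
  (i \notin s -> exists c : K, gen b i * Ns s w = c *: (Ns s w * gen b i)).
Proof.
elim: s => [_|j s IH /= /andP [js us]].
  split => // _; exists 1; by rewrite /Ns big_nil mulr1 mul1r scale1r.
have [IH1 IH2] := IH us.
rewrite /Ns !big_cons -/(Ns s w) -/(Ns s (upd w i b)) in IH1 IH2 *.
rewrite in_cons; case: (eqVneq i j) => [ji|ij] /=.
  subst j; split => // _.
  have [r [Hr E]] := gP b i (w i).
  exists r; split => //; rewrite mulrA E ffunE eqxx -mulrA; congr (_ * (_ * _)).
  apply: Ns_eq => k ks; rewrite ffunE; case: (eqVneq k i) => // ki.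
  by rewrite -ki ks in js.
have [c Ec] := P_other b i j (w j) ij.
have Pj : P j (upd w i b j) = P j (w j) by rewrite ffunE eq_sym (negbTE ij).
split.
- move=> /IH1 [r [Hr E]]; have [r' [Hr' E']] := P_R j (w j) r Hr.
  exists (c *: r'); split; first exact: gen_scale.
  by rewrite mulrA Ec -scalerAl -mulrA E (mulrA (P j _)) E' Pj -scalerAl mulrA.
- move=> /IH2 [c' E]; exists (c * c').
  by rewrite mulrA Ec -scalerAl -[P j (w j) * gen b i * _]mulrA E -scalerAr scalerA mulrA.
Qed.

Definition N (w : {ffun I -> int}) := Ns (enum I) w.

Lemma gN b i w : exists r, Rs r /\ gen b i * N w = r * N (upd w i b).
Proof. by have [H _] := gNs b i w (enum I) (enum_uniq I); apply: H; rewrite mem_enum. Qed.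


Definition Sp (a : A) := exists l : seq (A * {ffun I -> int}),
  (forall t, t \in l -> Rs t.1) /\ a = \sum_(t <- l) t.1 * N t.2.

Lemma Sp0 : Sp 0. Proof. by exists [::]; rewrite big_nil. Qed.

Lemma Sp_term r w : Rs r -> Sp (r * N w).
Proof.
move=> Hr; exists [:: (r, w)]; split; last by rewrite big_seq1.
by move=> t; rewrite inE => /eqP ->.
Qed.

Lemma Sp_add a b : Sp a -> Sp b -> Sp (a + b).
Proof.
move=> [l1 [H1 ->]] [l2 [H2 ->]]; exists (l1 ++ l2); split; last by rewrite big_cat.
by move=> t; rewrite mem_cat => /orP [/H1|/H2].
Qed.

Lemma Sp_scale c a : Sp a -> Sp (c *: a).
Proof.
move=> [l [H ->]]; exists [seq (c *: t.1, t.2) | t <- l]; split.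
  by move=> t /mapP [t' /H Ht' ->]; apply: gen_scale.
by rewrite big_map scaler_sumr; apply: eq_bigr => t _; rewrite scalerAl.
Qed.

Lemma Sp_gen b i a : Sp a -> Sp (gen b i * a).
Proof.
move=> [l [H ->]]; elim: l H => [|t l IH] H; first by rewrite big_nil mulr0; exact: Sp0.
rewrite big_cons mulrDr; apply: Sp_add; last first.
  by apply: IH => t' Ht'; apply: H; rewrite inE Ht' orbT.
have Ht : Rs t.1 by apply: H; rewrite inE eqxx.
have [r1 [H1 E1]] := gen_R b i t.1 Ht.
have [r2 [H2 E2]] := gN b i t.2.
by rewrite mulrA E1 -mulrA E2 mulrA; apply: Sp_term; apply: gen_mul.
Qed.

Lemma N_zero (w : {ffun I -> int}) : (forall j, w j = 0) -> N w = 1.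
Proof. by move=> H; rewrite /N /Ns big1_seq // => j _; rewrite H /= expr0. Qed.

Lemma Sp1 : Sp 1.
Proof.
have := @Sp_term 1 [ffun _ => 0] (gen_one _).
by rewrite N_zero ?mulr1 // => j; rewrite ffunE.
Qed.

Lemma Sp_mul a : gen_subalg (fun b => exists i, b = x i \/ b = d i) a ->
  forall b, Sp b -> Sp (a * b).
Proof.
elim=> {a} [a [i [->| ->]]||||].
- by move=> b; apply: (Sp_gen true).
- by move=> b; apply: (Sp_gen false).
- by move=> b Hb; rewrite mul1r.
- by move=> c a _ IH b Hb; rewrite -scalerAl; apply/Sp_scale/IH.
- by move=> a1 a2 _ IH1 _ IH2 b Hb; rewrite mulrDl; apply: Sp_add; [apply: IH1|apply: IH2].
- by move=> a1 a2 _ IH1 _ IH2 b Hb; rewrite -mulrA; apply/IH1/IH2.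
Qed.


Definition ad j (a : A) := h j * a - a * h j.

Lemma ad_add j a b : ad j (a + b) = ad j a + ad j b.
Proof. by rewrite /ad mulrDr mulrDl opprD addrACA. Qed.
Lemma ad_scale j c a : ad j (c *: a) = c *: ad j a.
Proof. by rewrite /ad -scalerAr -scalerAl scalerBr. Qed.
Lemma ad_mul j a b : ad j (a * b) = ad j a * b + a * ad j b.
Proof. by rewrite /ad mulrBl mulrBr !mulrA addrA subrK. Qed.
Lemma ad_sum j (T : Type) (l : seq T) (P0 : pred T) (F : T -> A) :
  ad j (\sum_(t <- l | P0 t) F t) = \sum_(t <- l | P0 t) ad j (F t).
Proof. by apply: big_morph; [apply: ad_add | rewrite /ad mulr0 mul0r subrr]. Qed.
Lemma ad_R j r : Rs r -> ad j r = 0.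
Proof. by move=> Hr; rewrite /ad R_hcomm // subrr. Qed.

Lemma ad_other b i j : i != j -> ad j (gen b i) = 0.
Proof. by move=> ij; rewrite /ad gen_h // subrr. Qed.
Lemma ad_other' b i j : i != j -> ad j (gen b i) = 0 *: gen b i.
Proof. by move=> ij; rewrite scale0r ad_other. Qed.

Lemma ad_x i : ad i (x i) = - e0 i *: x i.
Proof.
have H : e0 i *: (h i * x i) = - (h i * x i).
  apply/eqP; rewrite -addr_eq0 addrC /h -mulrA scalerAr -mulrDr Rxx mulr0 //.
by rewrite /ad xh -scalerAl mulrBl mul1r scalerBr H opprK opprD addrC subrK scaleNr.
Qed.

Lemma ad_d i : ad i (d i) = e0 i *: d i.
Proof.
have H : e0 i *: (d i * h i) = - (d i * h i).
  apply/eqP; rewrite -addr_eq0 addrC /h mulrA scalerAl -mulrDl Rdd mul0r //.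
by rewrite /ad hd scalerBr H opprK addrK.
Qed.

Lemma ad_pow {j} {a : A} {c} m : ad j a = c *: a -> ad j (a ^+ m) = (m%:R * c) *: a ^+ m.
Proof.
move=> H; elim: m => [|m IH]; first by rewrite expr0 /ad mulr1 mul1r subrr mul0r scale0r.
rewrite exprSr ad_mul IH H -scalerAl -scalerAr -scalerDl -natr1 mulrDl mul1r //.
Qed.

Definition lam j (k : int) : K := - e0 j * k%:~R.

Lemma ad_P i j k : ad j (P i k) = (if i == j then lam j k else 0) *: P i k.
Proof.
case: (eqVneq i j) => [<-|ij].
  rewrite /lam; case: k => m /=.
    by rewrite (ad_pow _ (ad_x i)) mulrC.
  by rewrite (ad_pow _ (ad_d i)) NegzE intrN mulrN mulNr opprK mulrC.
by case: k => m /=; [rewrite (ad_pow _ (ad_other' true i j ij)) | rewrite (ad_pow _ (ad_other' false i j ij))];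
  rewrite mulr0.
Qed.


Lemma ad_Ns j s (w : I -> int) :
  ad j (Ns s w) = ((count_mem j s)%:R * lam j (w j)) *: Ns s w.
Proof.
elim: s => [|i s IH]; first by rewrite /Ns big_nil /= /ad mulr1 mul1r subrr mul0r scale0r.
rewrite /Ns big_cons -/(Ns s w) ad_mul IH ad_P /= -scalerAl -scalerAr -scalerDl.
congr (_ *: _); rewrite natrD mulrDl; congr (_ + _).
by case: (eqVneq i j) => [->|ij]; rewrite /= ?mul1r ?mul0r.
Qed.

Definition mu (w : {ffun I -> int}) : {ffun I -> K} := [ffun j => lam j (w j)].

Lemma ad_N j w : ad j (N w) = mu w j *: N w.
Proof.
by rewrite /N ad_Ns count_uniq_mem ?enum_uniq // mem_enum mul1r ffunE.
Qed.

Lemma ad_term j r w : Rs r -> ad j (r * N w) = mu w j *: (r * N w).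
Proof. by move=> Hr; rewrite ad_mul ad_R // mul0r add0r ad_N scalerAr. Qed.

Lemma mu0 w : [forall j, mu w j == 0] -> forall j, w j = 0.
Proof.
move=> /forallP H j; have := H j; rewrite ffunE /lam mulf_eq0 oppr_eq0.
have -> : (e0 j == 0) = false.
  by apply/negbTE/eqP => E; have := e2 j j; rewrite /e0 in E; rewrite E mul0r => /eqP; rewrite eq_sym oner_eq0.
case: (w j) => m /=.
  by have := (pcharf0P K).1 hK m => ->; move/eqP ->.
by rewrite NegzE intrN oppr_eq0 ((pcharf0P K).1 hK).
Qed.


Lemma proj (E : eqType) (v : E -> A) (m : E -> {ffun I -> K}) n :
  forall (l : seq E) (c : E -> K), (size l <= n)%N ->
  (forall t, t \in l -> forall j, ad j (v t) = m t j *: v t) ->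
  (forall j, ad j (\sum_(t <- l) c t *: v t) = 0) ->
  \sum_(t <- l) c t *: v t = \sum_(t <- l | [forall j, m t j == 0]) c t *: v t.
Proof.
elim: n => [|n IH] l c.
  by rewrite leqn0 => /nilP -> _ _; rewrite !big_nil.
move=> Hs Heig Had.
case: (boolP (all (fun t => [forall j, m t j == 0]) l)) => [HZ | /allPn [t0 t0l nZ]].
  by rewrite [in RHS]/= -big_filter (all_filterP HZ).
move/forallPn: nZ => [j nj].
set lm := m t0 j.
have lm0 : lm != 0 by [].
have Hsum : ad j (\sum_(t <- l) c t *: v t) = \sum_(t <- l) (c t * m t j) *: v t.
  rewrite ad_sum big_seq [RHS]big_seq; apply: eq_bigr => t tl.
  by rewrite ad_scale Heig // scalerA.
pose c' t := c t * (lm - m t j) / lm.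
pose pp t := m t j != lm.
have S1 : \sum_(t <- l) c t *: v t = \sum_(t <- l) c' t *: v t.
  have -> : \sum_(t <- l) c' t *: v t =
     \sum_(t <- l) (c t *: v t - lm^-1 *: ((c t * m t j) *: v t)).
    apply: eq_bigr => t _; rewrite scalerA -scalerBl; congr (_ *: _).
    by rewrite /c'; field.
  by rewrite sumrB -scaler_sumr -Hsum Had scaler0 subr0.
have S2 : \sum_(t <- l) c' t *: v t = \sum_(t <- filter pp l) c' t *: v t.
  rewrite big_filter (bigID pp) /= [X in _ + X]big1 ?addr0 // => t.
  by rewrite /pp negbK => /eqP Et; rewrite /c' Et subrr mulr0 mul0r scale0r.
have Hs' : (size (filter pp l) <= n)%N.
  have Hh : has (predC pp) l by apply/hasP; exists t0 => //=; rewrite /pp negbK eqxx.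
  move: Hs; rewrite size_filter -(count_predC pp l) has_count in Hh *.
  by move: Hh; lia.
have := IH (filter pp l) c' Hs'.
rewrite -S2 -S1 => /(_ _ Had) ->; last by move=> t; rewrite mem_filter => /andP [_ /Heig].
rewrite big_filter_cond; apply: eq_big => t.
  case Z: [forall j, m t j == 0]; rewrite ?andbF ?andbT //.
  by rewrite /pp; move/forallP: Z => /(_ j) /eqP ->; rewrite eq_sym.
move=> /andP [_]; move/forallP => /(_ j) /eqP Et; rewrite /c' Et subr0 -mulrA mulfV ?mulr1 //.
Qed.


Lemma R0 : Rs 0.
Proof. by rewrite -(scale0r 1); apply/gen_scale/gen_one. Qed.

Lemma main_sec :
  (forall a, gen_subalg (fun b => exists i, b = x i \/ b = d i) a) ->
  max_comm_subalg Rs.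
Proof.
move=> hgen; split.
- by split; [apply: gen_one | apply: gen_add | apply: gen_mul | apply: gen_scale].
- exact: R_comm.
move=> T _ Tc RT a Ta.
have Had : forall j, ad j a = 0.
  by move=> j; rewrite /ad (Tc (h j) a (RT _ (R_h j)) Ta) subrr.
have [l [Hl Ea]] : Sp a by rewrite -[a]mulr1; apply: Sp_mul (hgen a) _ Sp1.
pose v (t : A * {ffun I -> int}) := t.1 * N t.2.
have E1 : a = \sum_(t <- l) (fun _ => 1) t *: v t.
  by rewrite Ea; apply: eq_bigr => t _; rewrite scale1r.
rewrite E1 (@proj _ v (fun t => mu t.2) (size l) l (fun _ => 1) (leqnn _)).
- rewrite big_seq_cond; apply: big_ind => //; first exact: R0.
    by move=> ? ? ? ?; apply: gen_add.
  move=> t /andP [tl Z]; rewrite scale1r /v N_zero ?mulr1; first exact: Hl.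
  exact: mu0.
- by move=> t tl j; rewrite /v ad_term //; apply: Hl.
- by move=> j; rewrite -E1.
Qed.

End CW.

Theorem mainTheorem1 (K : closedFieldType) (hK : [pchar K] =i pred0)
  (p q : nat) (sgn : bool) (A : algType K) (x d : 'I_(p + q) -> A)
  (hA : is_clifford_weyl sgn x d) :
  max_comm_subalg (gen_subalg (fun b => exists i, b = d i * x i)).
Proof.
case: hA => hrel [hgen _].
exact: (@main_sec K hK p q sgn A x d hrel hgen).
Qed.
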